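(* The relation $\le^{\oplus}$ on $\mathrm{Eq}$ is antisymmetric and transitive; consequently $<^{\oplus}$ (defined by $C_1<^{\oplus}C_2$ iff $C_1\le^{\oplus}C_2$ and $C_1\neq C_2$) is a strict partial order on $\mathrm{Eq}$.
   Context: $G=G[Q]$ is the query graph of a Boolean CQ without self-joins whose atoms are $R(u,v)$ with first attribute the key: vertices are variables, and each atom gives an edge $e_R=(u_R,v_R)$, consistent or inconsistent according to the type of $R$; $E^i$ is the set of inconsistent edges. $x\to y$ means there is a directed path (possibly with zero edges) from $x$ to $y$ all of whose edges are consistent; $u^{\oplus}=\{v: u\to v\}$; $u^+$ is the set of vertices reachable from $u$ by any directed path. For $R,S\in E^i$, $R\sim S$ iff $u_S\in u_R^+$ and $u_R\in u_S^+$. $\mathrm{Eq}$ is the set of $\sim$-equivalence classes of $E^i$. For $C\in\mathrm{Eq}$, $C^{\oplus}=\bigcap_{R\in C}u_R^{\oplus}$. For $C_1,C_2\in\mathrm{Eq}$, $C_1\le^{\oplus}C_2$ iff there exists $S\in C_2$ with $u_S\in C_1^{\oplus}$. *)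

(* Defs.v *)
From mathcomp Require Import all_boot.
Set Implicit Arguments. Unset Strict Implicit. Unset Printing Implicit Defensive.

(* A query graph: variables V, atoms A (one per relation name; no self-joins),
   atom R(u_R, v_R) gives the edge (u R, v R); [isc R] is true iff R is
   consistent. *)
Section QueryGraph.
Variables (V A : finType) (u v : A -> V) (isc : A -> bool).

Definition cedge : rel V := fun x y => [exists R, [&& isc R, u R == x & v R == y]].
Definition anyedge : rel V := fun x y => [exists R, (u R == x) && (v R == y)].

Definition carrow (x y : V) : bool := connect cedge x y.
Definition uplus_c (x : V) : {set V} := [set y | carrow x y].
Definition uplus (x : V) : {set V} := [set y | connect anyedge x y].

Definition Ei : {set A} := [set R | ~~ isc R].

Definition sim (R S : A) : bool := (u S \in uplus (u R)) && (u R \in uplus (u S)).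

Definition Eq : {set {set A}} := [set [set S in Ei | sim R S] | R in Ei].

Definition Cplus (C : {set A}) : {set V} := \bigcap_(R in C) uplus_c (u R).

Definition le_plus (C1 C2 : {set A}) : bool := [exists S in C2, u S \in Cplus C1].

Definition lt_plus (C1 C2 : {set A}) : bool := le_plus C1 C2 && (C1 != C2).

End QueryGraph.

(* Main.v *)
Require Import Defs.
From mathcomp Require Import all_boot.
Set Implicit Arguments. Unset Strict Implicit. Unset Printing Implicit Defensive.

Section H.
Variables (V A : finType) (u v : A -> V) (isc : A -> bool).

Lemma carrow_any x y : carrow u v isc x y -> connect (anyedge u v) x y.
Proof.
apply: connect_sub => a b /existsP [R /and3P [_ h1 h2]].
apply: connect1; apply/existsP; exists R; by rewrite h1 h2.
Qed.

Lemma carrow_trans x y z : carrow u v isc x y -> carrow u v isc y z -> carrow u v isc x z.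
Proof. exact: connect_trans. Qed.

Lemma sim_sym R S : sim u v R S -> sim u v S R.
Proof. by rewrite /sim andbC. Qed.

Lemma sim_trans R S T : sim u v R S -> sim u v S T -> sim u v R T.
Proof.
rewrite /sim /uplus !inE => /andP [a b] /andP [c d].
by rewrite (connect_trans a c) (connect_trans d b).
Qed.

Lemma class_eq R1 R2 : sim u v R1 R2 ->
  [set S in Ei isc | sim u v R1 S] = [set S in Ei isc | sim u v R2 S].
Proof.
move=> h; apply/setP => S; rewrite !inE.
apply/idP/idP => /andP [e h']; rewrite e /=.
- exact: sim_trans (sim_sym h) h'.
- exact: sim_trans h h'.
Qed.

Lemma EqP C : C \in Eq u v isc -> exists2 R, R \in Ei isc & C = [set S in Ei isc | sim u v R S].
Proof. by case/imsetP => R HR ->; exists R. Qed.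

Lemma antisym C1 C2 : C1 \in Eq u v isc -> C2 \in Eq u v isc ->
     le_plus u v isc C1 C2 -> le_plus u v isc C2 C1 -> C1 = C2.
Proof.
move=> /EqP [R1 _ ->] /EqP [R2 _ ->].
move=> /existsP [S /andP [HS /bigcapP HS1]] /existsP [T /andP [HT /bigcapP HT1]].
have h1 := HS1 T HT; have h2 := HT1 S HS.
rewrite inE in h1; rewrite inE in h2.
move: HS HT; rewrite !inE => /andP [_ s2] /andP [_ t1].
apply: class_eq.
apply: (sim_trans t1).
apply: (sim_trans _ (sim_sym s2)).
by rewrite /sim /uplus !inE (carrow_any h1) (carrow_any h2).
Qed.

Lemma ltrans C1 C2 C3 :
     le_plus u v isc C1 C2 -> le_plus u v isc C2 C3 -> le_plus u v isc C1 C3.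
Proof.
move=> /existsP [S /andP [HS /bigcapP HS1]] /existsP [T /andP [HT /bigcapP HT1]].
apply/existsP; exists T; rewrite HT /=; apply/bigcapP => R HR.
have a := HS1 R HR; have b := HT1 S HS; rewrite inE in a b; rewrite inE.
rewrite inE in b. exact: carrow_trans a b.
Qed.
End H.

Theorem proposition5p2 (V A : finType) (u v : A -> V) (isc : A -> bool) :
  (* antisymmetry of <=^oplus on Eq *)
  (forall C1 C2, C1 \in Eq u v isc -> C2 \in Eq u v isc ->
     le_plus u v isc C1 C2 -> le_plus u v isc C2 C1 -> C1 = C2) /\
  (* transitivity of <=^oplus on Eq *)
  (forall C1 C2 C3, C1 \in Eq u v isc -> C2 \in Eq u v isc -> C3 \in Eq u v isc ->
     le_plus u v isc C1 C2 -> le_plus u v isc C2 C3 -> le_plus u v isc C1 C3) /\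
  (* <^oplus is a strict partial order on Eq: irreflexive ... *)
  (forall C, C \in Eq u v isc -> ~~ lt_plus u v isc C C) /\
  (* ... and transitive *)
  (forall C1 C2 C3, C1 \in Eq u v isc -> C2 \in Eq u v isc -> C3 \in Eq u v isc ->
     lt_plus u v isc C1 C2 -> lt_plus u v isc C2 C3 -> lt_plus u v isc C1 C3).
Proof.
split; first exact: antisym.
split; first by move=> C1 C2 C3 _ _ _; exact: ltrans.
split; first by move=> C _; rewrite /lt_plus eqxx andbF.
move=> C1 C2 C3 H1 H2 H3 /andP [a na] /andP [b nb].
rewrite /lt_plus (ltrans a b) /=; apply/eqP => E.
subst C3; by rewrite (antisym H1 H2 a b) eqxx in na.
Qed.
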